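(* Let $V$ be a finite nonempty set, let $d \ge 1$ be an integer, and let $R = (\le_1, \ldots, \le_d)$ be a $d$-representation on $V$. Then the supremum section $\Sigma(R)$ is collapsible.
   Context: A $d$-representation on $V$ is a family of $d$ linear orders $\le_1,\ldots,\le_d$ on $V$. For a linear order $\le$ on $V$, $x\in V$ and $F\subseteq V$, $x$ dominates $F$ in $\le$ if $f\le x$ for every $f\in F$; $x$ dominates $F$ in $R$ if $x$ dominates $F$ in some $\le_i$. The supremum section $\Sigma(R)$ is the set of all subsets $F\subseteq V$ such that every $v\in V$ dominates $F$ in $R$ (in particular $\emptyset\in\Sigma(R)$); it is an abstract simplicial complex (a family of subsets of $V$ closed under taking subsets), whose elements are called faces and whose inclusion-maximal faces are called facets. A face $F$ of a simplicial complex $\Delta$ is free if it is nonempty, not maximal, and contained in exactly one facet of $\Delta$. $\Delta$ collapses to $\Gamma$ if there are simplicial complexes $\Delta_1=\Delta,\Delta_2,\ldots,\Delta_k=\Gamma$ and, for each $i\le k-1$, a free face $F_i$ of $\Delta_i$ with $\Delta_{i+1}=\Delta_i\setminus\{F\in\Delta_i : F_i\subseteq F\}$. $\Delta$ is collapsible if it collapses to a point, i.e. to a complex of the form $\{\emptyset,\{v\}\}$. *)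

(* Defs.v *)
From mathcomp Require Import all_boot.
Set Implicit Arguments. Unset Strict Implicit. Unset Printing Implicit Defensive.

Definition linear_order (V : finType) (le : rel V) : Prop :=
  [/\ reflexive le, antisymmetric le, transitive le & total le].

Definition d_representation (V : finType) (d : nat) (R : 'I_d -> rel V) : Prop :=
  forall i, linear_order (R i).

Definition dominates (V : finType) (le : rel V) (x : V) (F : {set V}) : bool :=
  [forall f in F, le f x].

Definition dominatesR (V : finType) (d : nat) (R : 'I_d -> rel V) (x : V)
  (F : {set V}) : bool :=
  [exists i : 'I_d, dominates (R i) x F].

Definition supremum_section (V : finType) (d : nat) (R : 'I_d -> rel V)
  : {set {set V}} :=
  [set F : {set V} | [forall v : V, dominatesR R v F]].

Definition is_facet (V : finType) (D : {set {set V}}) (F : {set V}) : bool :=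
  (F \in D) && [forall G in D, (F \subset G) ==> (G == F)].

Definition free_face (V : finType) (D : {set {set V}}) (F : {set V}) : bool :=
  [&& F \in D, F != set0, ~~ is_facet D F &
      #|[set G in D | is_facet D G && (F \subset G)]| == 1].

Definition remove_star (V : finType) (D : {set {set V}}) (F : {set V})
  : {set {set V}} :=
  D :\: [set G in D | F \subset G].

Inductive collapses (V : finType) : {set {set V}} -> {set {set V}} -> Prop :=
  | collapses_refl D : collapses D D
  | collapses_step D F G :
      free_face D F -> collapses (remove_star D F) G -> collapses D G.

Definition collapsible (V : finType) (D : {set {set V}}) : Prop :=
  exists v : V, collapses D [set set0; [set v]].

(* Main.v *)
Require Import Defs.
From mathcomp Require Import all_boot.
From mathcomp Require Import zify.
Set Implicit Arguments. Unset Strict Implicit. Unset Printing Implicit Defensive.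

Lemma collapses_trans (V : finType) (A B C : {set {set V}}) :
  collapses A B -> collapses B C -> collapses A C.
Proof.
elim=> [D|D F G hF _ IH] // hBC.
exact: collapses_step hF (IH hBC).
Qed.

Lemma collapses_sub (V : finType) (A B : {set {set V}}) :
  collapses A B -> B \subset A.
Proof.
elim=> [D|D F G hF _ IH]; first exact: subxx.
apply: subset_trans IH _; exact: subsetDl.
Qed.

Definition glue (V : finType) (N : {set {set V}}) (x : V) (L : {set {set V}})
  : {set {set V}} :=
  [set H : {set V} | if x \in H then (H :\ x) \in L else H \in N].

Lemma glue_in (V : finType) (N L : {set {set V}}) x (H : {set V}) :
  (H \in glue N x L) = (if x \in H then (H :\ x) \in L else H \in N).
Proof. by rewrite inE. Qed.

Lemma glue_U1 (V : finType) (N L : {set {set V}}) x (G : {set V}) : x \notin G ->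
  (x |: G \in glue N x L) = (G \in L).
Proof. by move=> xG; rewrite glue_in setU11 setU1K. Qed.

Lemma glue_facet (V : finType) (N L : {set {set V}}) x (G : {set V}) :
  (forall K, K \in L -> x \notin K) -> x \notin G ->
  is_facet (glue N x L) (x |: G) = is_facet L G.
Proof.
move=> hL xG; rewrite /is_facet glue_U1 //.
apply/andP/andP => [[GL /forall_inP h]|[GL /forall_inP h]]; split=> //;
  apply/forall_inP=> K KL; apply/implyP=> GK.
- have := h (x |: K); rewrite glue_U1 ?hL // => /(_ KL) /implyP.
  move=> /(_ (setUS _ GK)) /eqP e; apply/eqP.
  by rewrite -(setU1K xG) -(setU1K (hL _ KL)) e.
- have xK : x \in K by apply: (subsetP GK); rewrite setU11.
  have KxL : K :\ x \in L by move: KL; rewrite glue_in xK.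
  have := h (K :\ x) KxL => /implyP.
  have GKx : G \subset K :\ x.
    by rewrite subsetD1 xG andbT; apply: subset_trans GK; exact: subsetUr.
  move=> /(_ GKx) /eqP e; apply/eqP.
  by rewrite -e setD1K.
Qed.

Lemma glue_facets (V : finType) (N L : {set {set V}}) x (F : {set V}) :
  (forall K, K \in L -> x \notin K) -> x \notin F ->
  [set H in glue N x L | is_facet (glue N x L) H && (x |: F \subset H)] =
  [set x |: G | G in [set G in L | is_facet L G && (F \subset G)]].
Proof.
move=> hL xF; apply/setP=> H; rewrite inE.
apply/andP/imsetP.
- case=> HD /andP[fH FH].
  have xH : x \in H by apply: (subsetP FH); rewrite setU11.
  have HxL : H :\ x \in L by move: HD; rewrite glue_in xH.
  have xHx : x \notin H :\ x by rewrite setD11.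
  exists (H :\ x); last by rewrite setD1K.
  rewrite inE HxL /= -(glue_facet N hL xHx) setD1K // fH /=.
  rewrite subsetD1 xF andbT; apply: subset_trans FH; exact: subsetUr.
- case=> G; rewrite inE => /andP[GL /andP[fG FG]] ->.
  have xG := hL _ GL.
  rewrite glue_U1 // GL; split=> //; rewrite glue_facet // fG /=.
  exact: setUS.
Qed.

Lemma glue_free (V : finType) (N L : {set {set V}}) x (F : {set V}) :
  (forall K, K \in L -> x \notin K) -> free_face L F ->
  free_face (glue N x L) (x |: F).
Proof.
move=> hL /and4P[FL F0 nf c1].
have xF := hL _ FL.
apply/and4P; split.
- by rewrite glue_U1.
- by apply/set0Pn; exists x; exact: setU11.
- by rewrite glue_facet.
- rewrite glue_facets // card_in_imset //.
  move=> G1 G2; rewrite !inE => /andP[G1L _] /andP[G2L _] e.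
  by rewrite -(setU1K (hL _ G1L)) e setU1K ?hL.
Qed.

Lemma glue_remove (V : finType) (N L : {set {set V}}) x (F : {set V}) : x \notin F ->
  remove_star (glue N x L) (x |: F) = glue N x (remove_star L F).
Proof.
move=> xF; apply/setP=> H; rewrite /remove_star in_setD !glue_in inE glue_in.
case: (boolP (x \in H)) => xH.
- rewrite in_setD inE.
  have -> : (x |: F \subset H) = (F \subset H) by rewrite subUset sub1set xH.
  have -> : (F \subset H :\ x) = (F \subset H) by rewrite subsetD1 xF andbT.
  by case: (H :\ x \in L); rewrite ?andbF ?andbT.
- have -> : (x |: F \subset H) = false.
    by apply/negbTE/negP => /subsetP /(_ x (setU11 _ _)); rewrite (negbTE xH).
  by rewrite andbF.
Qed.

Lemma glue_lift (V : finType) N x (L L' : {set {set V}}) :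
  collapses L L' -> (forall K, K \in L -> x \notin K) ->
  collapses (glue N x L) (glue N x L').
Proof.
elim=> [D|D F G hF _ IH] hD; first exact: collapses_refl.
have xF : x \notin F by apply: hD; case/and4P: hF.
apply: collapses_step (glue_free N hD hF) _.
rewrite glue_remove //; apply: IH => K; rewrite /remove_star inE => /andP[_].
exact: hD.
Qed.

Lemma glue_point (V : finType) (N : {set {set V}}) x (y : V) : y != x ->
  collapses (glue N x [set set0; [set y]]) (glue N x set0).
Proof.
move=> yx.
set P := [set set0; [set y]].
have hP : forall K, K \in P -> x \notin K.
  move=> K; rewrite !inE => /orP[] /eqP ->; by rewrite ?inE // eq_sym.
have e0 : [set x] = x |: set0 by rewrite setU0.
have x0 : x \notin (set0 : {set V}) by rewrite inE.
have f0 : ~~ is_facet P set0.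
  rewrite /is_facet negb_and; apply/orP; right; apply/forall_inP => h.
  have := h [set y]; rewrite !inE eqxx orbT sub0set => /(_ isT) /eqP /setP /(_ y).
  by rewrite !inE eqxx.
have S1 : [set G in P | is_facet P G && (set0 \subset G)] = [set [set y]].
  apply/setP=> G; rewrite !inE sub0set andbT.
  case: (boolP (G == set0)) => [/eqP ->|G0] /=.
    rewrite (negbTE f0) /=; apply/esym/negbTE; apply/eqP => /setP /(_ y).
    by rewrite !inE eqxx.
  case: (boolP (G == [set y])) => [/eqP ->|] //=.
  rewrite /is_facet !inE eqxx orbT /=; apply/forall_inP => K0.
  rewrite !inE => /orP[] /eqP ->; [apply/implyP => /subsetP /(_ y (set11 y)); by rewrite inE | by rewrite eqxx implybT].
apply: (@collapses_step _ _ [set x]); last first.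
  rewrite e0 glue_remove //.
  have -> : remove_star P set0 = set0.
    apply/setP=> G; rewrite /remove_star !inE sub0set.
    by case: (_ || _).
  exact: collapses_refl.
apply/and4P; split.
- by rewrite e0 glue_U1 // !inE eqxx.
- by apply/set0Pn; exists x; rewrite inE.
- by rewrite e0 glue_facet.
- by rewrite e0 glue_facets // S1 imset_set1 cards1.
Qed.

Lemma glue_set0 (V : finType) (N : {set {set V}}) x :
  (forall K, K \in N -> x \notin K) -> glue N x set0 = N.
Proof.
move=> hN; apply/setP=> H; rewrite glue_in inE.
case: (boolP (x \in H)) => xH //.
apply/esym/negbTE/negP => HN; by move: (hN _ HN); rewrite xH.
Qed.

Definition Sig (V : finType) (d : nat) (R : 'I_d -> rel V) (J : {set 'I_d})
  (W B : {set V}) : {set {set V}} :=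
  [set G : {set V} | (G \subset W) &&
     [forall v in W, [exists j in J, [forall f in G :|: B, R j f v]]]].

Lemma SigP (V : finType) (d : nat) (R : 'I_d -> rel V) (J : {set 'I_d})
  (W B G : {set V}) :
  reflect (G \subset W /\ forall v, v \in W ->
             exists2 j, j \in J & forall f, f \in G :|: B -> R j f v)
          (G \in Sig R J W B).
Proof.
rewrite inE; apply: (iffP andP) => [[GW /forall_inP h]|[GW h]]; split=> //.
  move=> v vW; have /exists_inP [j jJ /forall_inP hj] := h v vW.
  by exists j.
apply/forall_inP => v vW; have [j jJ hj] := h v vW.
by apply/exists_inP; exists j => //; apply/forall_inP.
Qed.

Lemma Sig_sub0 (V : finType) (d : nat) (R : 'I_d -> rel V) (J : {set 'I_d})
  (W B G : {set V}) : G \in Sig R J W B -> set0 \in Sig R J W B.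
Proof.
case/SigP=> GW h; apply/SigP; split; first exact: sub0set.
move=> v vW; have [j jJ hj] := h v vW; exists j => // f.
rewrite set0U => fB; apply: hj; by rewrite inE fB orbT.
Qed.

Lemma exists_max_seq (V : eqType) (le : rel V) :
  transitive le -> total le -> forall s : seq V, s != [::] ->
  exists2 x, x \in s & forall v, v \in s -> le v x.
Proof.
move=> tr to; elim=> [|a s IH] // _.
case: (eqVneq s [::]) => [->|sn].
  exists a; first by rewrite inE.
  move=> v; rewrite inE => /eqP ->; by case/orP: (to a a).
have [x xs hx] := IH sn.
case/orP: (to a x) => ax.
  exists x; first by rewrite inE xs orbT.
  by move=> v; rewrite inE => /orP[/eqP ->|/hx].
exists a; first by rewrite inE eqxx.
move=> v; rewrite inE => /orP[/eqP ->|/hx vx]; first by case/orP: (to a a).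
exact: tr vx ax.
Qed.

Lemma exists_max (V : finType) (le : rel V) (W : {set V}) :
  transitive le -> total le -> W != set0 ->
  exists2 x, x \in W & forall v, v \in W -> le v x.
Proof.
move=> tr to /set0Pn [w wW].
have : enum W != [::] by apply/eqP => e; move: (mem_enum W w); rewrite e wW.
case/(exists_max_seq tr to) => x; rewrite mem_enum => xW hx.
by exists x => // v vW; apply: hx; rewrite mem_enum.
Qed.

Lemma main_ind (V : finType) (d : nat) (R : 'I_d -> rel V) : d_representation R ->
  forall n (J : {set 'I_d}) (W B : {set V}), #|J| + #|W| <= n -> W != set0 ->
  set0 \in Sig R J W B -> collapsible (Sig R J W B).
Proof.
move=> hR; elim=> [|n IH] J W B hn W0 h0.
  by move: hn W0; rewrite -card_gt0; lia.
have [v vW] := set0Pn _ W0.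
have [j0 j0J _] : exists2 j0, j0 \in J & True.
  by case/SigP: h0 => _ /(_ v vW) [j jJ _]; exists j.
have [refl0 anti0 trans0 total0] := hR j0.
have [x xW xmax] := exists_max trans0 total0 W0.
case: (boolP [exists b in B, ~~ R j0 b x]) => [/exists_inP [b bB nbx] | hB].
  have e : Sig R J W B = Sig R (J :\ j0) W B.
    apply/setP => G; apply/SigP/SigP => [][GW hG]; split => // u uW.
      have [j jJ hj] := hG u uW; exists j => //.
      rewrite in_setD1 jJ andbT; apply/eqP => ej; subst j.
      move/negP: nbx; apply; apply: (trans0 u) (xmax u uW).
      by apply: hj; rewrite inE bB orbT.
    have [j jJ hj] := hG u uW; exists j => //.
    by move: jJ; rewrite in_setD1 => /andP[].
  rewrite e; apply: IH => //; last by rewrite -e.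
  by move: hn; rewrite (cardsD1 j0 J) j0J; lia.
have hBx : forall b, b \in B -> R j0 b x.
  move=> b bB; apply/negPn/negP => nb; apply: (negP hB); apply/exists_inP.
  by exists b.
have xG : forall G : {set V}, G \subset W -> forall f, f \in G :|: B -> R j0 f x.
  move=> G GW f; rewrite inE => /orP[fG|fB]; last exact: hBx.
  by apply: xmax; apply: (subsetP GW).
case: (eqVneq (W :\ x) set0) => Wx0.
  have Wx : W = [set x] by rewrite -(setD1K xW) Wx0 setU0.
  exists x.
  have -> : Sig R J W B = [set set0; [set x]]; last exact: collapses_refl.
  apply/setP=> G; rewrite in_setU1 in_set1; apply/idP/idP.
    by case/SigP => GW _; move: GW; rewrite Wx subset1 orbC.
  case/orP => /eqP -> //; apply/SigP; split; first by rewrite Wx.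
  move=> u; rewrite Wx inE => /eqP ->; exists j0 => //.
  by apply: xG; rewrite Wx.
set N := Sig R J (W :\ x) B.
set L := Sig R (J :\ j0) (W :\ x) (x |: B).
have eD : Sig R J W B = glue N x L.
  apply/setP=> G; rewrite glue_in; case: (boolP (x \in G)) => xGx.
    apply/SigP/SigP => [][GW hG]; split.
    - exact: setSD.
    - move=> u; rewrite in_setD1 => /andP[ux uW].
      have [j jJ hj] := hG u uW; exists j.
        rewrite in_setD1 jJ andbT; apply/eqP => ej; subst j.
        move/negP: ux; apply; apply/eqP; apply: anti0.
        rewrite xmax //= hj // inE xGx //.
      move=> f; rewrite !inE => /orP[/andP[_ fG]|/orP[/eqP ->|fB]]; apply: hj.
      + by rewrite inE fG.
      + by rewrite inE xGx.
      + by rewrite inE fB orbT.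
    - by rewrite -(setD1K xGx) subUset sub1set xW /=; apply: subset_trans GW (subsetDl _ _).
    - move=> u uW; case: (eqVneq u x) => [->|ux].
        exists j0 => //; apply: xG.
        by rewrite -(setD1K xGx) subUset sub1set xW /=; apply: subset_trans GW (subsetDl _ _).
      have uWx : u \in W :\ x by rewrite in_setD1 ux uW.
      have [j jJ hj] := hG u uWx.
      exists j; first by move: jJ; rewrite in_setD1 => /andP[].
      move=> f fGB; apply: hj; move: fGB; rewrite !inE.
      by case: (eqVneq f x) => //= _; case: (f \in G); rewrite ?orbT.
  apply/SigP/SigP => [][GW hG]; split.
  - by rewrite subsetD1 GW xGx.
  - by move=> u; rewrite in_setD1 => /andP[_ /hG].
  - by move: GW; rewrite subsetD1 => /andP[].
  - move=> u uW; case: (eqVneq u x) => [->|ux].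
      exists j0 => //; apply: xG.
      by move: GW; rewrite subsetD1 => /andP[].
    by apply: hG; rewrite in_setD1 ux uW.
have hN : forall K, K \in N -> x \notin K.
  by move=> K /SigP [KW _]; apply/negP => /(subsetP KW); rewrite setD11.
have hL : forall K, K \in L -> x \notin K.
  by move=> K /SigP [KW _]; apply/negP => /(subsetP KW); rewrite setD11.
have hN0 : set0 \in N by move: h0; rewrite eD glue_in inE.
have [y0 hy0] : collapsible N.
  apply: IH => //; move: hn; rewrite (cardsD1 x W) xW; lia.
rewrite eD.
case: (boolP (set0 \in L)) => hL0.
  have [y hy] : collapsible L.
    apply: IH => //; move: hn; rewrite (cardsD1 x W) xW (cardsD1 j0 J) j0J; lia.
  have yx : y != x.
    have : [set y] \in L by apply: (subsetP (collapses_sub hy)); rewrite !inE eqxx orbT.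
    by move/hL; rewrite inE eq_sym.
  exists y0; apply: collapses_trans (glue_lift N hy hL) _.
  apply: collapses_trans (glue_point N yx) _.
  by rewrite glue_set0.
have -> : L = set0.
  apply/setP=> G; rewrite in_set0; apply/negP => GL; move/negP: hL0; apply.
  exact: Sig_sub0 GL.
by rewrite glue_set0 //; exists y0.
Qed.

Theorem theorem2 (V : finType) (d : nat) (R : 'I_d -> rel V) :
  0 < #|V| -> 1 <= d -> d_representation R ->
  collapsible (supremum_section R).
Proof.
move=> hV hd hR.
have -> : supremum_section R = Sig R setT setT set0.
  apply/setP=> G; rewrite inE; apply/forallP/SigP.
    move=> h; split; first exact: subsetT.
    move=> v _; have /existsP [j /forall_inP hj] := h v.
    by exists j; rewrite ?inE // => f; rewrite setU0; apply: hj.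
  case=> _ h v; have [j _ hj] := h v (in_setT v).
  apply/existsP; exists j; apply/forall_inP => f fG; apply: hj.
  by rewrite setU0.
apply: (main_ind hR (n := #|[set: 'I_d]| + #|[set: V]|)) => //.
  by rewrite -card_gt0 cardsT.
apply/SigP; split; first exact: sub0set.
move=> v _; exists (Ordinal hd); first by rewrite inE.
by move=> f; rewrite setU0 inE.
Qed.
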